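(* Let $W\subset S$ be a finite-dimensional $\mathbb{F}_q$-subspace and $\lambda,\mu$ partitions. If $T_{\lambda/\mu}(W)\neq0$, then $0\le\lambda_i-\mu_i\le\dim W$ for all $i$; in particular $\mu\subseteq\lambda$.
   Context: Let $q$ be a power of a prime $p$, $S=\mathbb{F}_q[x_1,\dots,x_n]$, $\widehat S=\bigcup_{r\ge0}\mathbb{F}_q[x_1^{q^{-r}},\dots,x_n^{q^{-r}}]$, $\varphi(u)=u^q$ the Frobenius automorphism of $\widehat S$. For a subspace $W\subset S$ of dimension $k$ with basis $w_1,\dots,w_k$ and strictly decreasing nonnegative integers $\alpha_1>\dots>\alpha_k$, $A_\alpha(W)=\det(w_i^{q^{\alpha_j}})_{i,j}$; for a partition $\lambda$ with at most $k$ nonzero parts, $S_\lambda(W)=A_{\lambda+\delta_k}(W)/A_{\delta_k}(W)$, $\delta_k=(k-1,\dots,0)$. $E_r(W)=S_{(1^r)}(W)$ for $0\le r\le k$, $E_r(W)=0$ otherwise. For partitions $\lambda,\mu$ with $N=\max\{\ell(\lambda),\ell(\mu)\}$ ($\ell$ = number of nonzero parts), $T_{\lambda/\mu}(W)=\det\big((-1)^{\lambda_i-\mu_j-i+j}\varphi^{\lambda_i-i}E_{\lambda_i-\mu_j-i+j}(W)\big)_{1\le i,j\le N}$. Parts $\lambda_i$ with $i>\ell(\lambda)$ are $0$. $\mu\subseteq\lambda$ means $\mu_i\le\lambda_i$ for all $i$. *)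

(* Defs.v *)
From HB Require Import structures.
From mathcomp Require Import all_boot all_order all_algebra all_field.
From mathcomp Require Import mpoly.
Set Implicit Arguments. Unset Strict Implicit. Unset Printing Implicit Defensive.
Import Order.TTheory GRing.Theory Num.Theory.
Local Open Scope ring_scope.

Definition lin_indep (F : finFieldType) (n k : nat) (w : 'I_k -> {mpoly F[n]}) :=
  forall c : 'I_k -> F, \sum_(i < k) c i *: w i = 0 -> forall i, c i = 0.

Section Moore.
Variables (K : fieldType) (q k : nat) (w : 'I_k -> K).

Definition Amoore (alpha : 'I_k -> nat) : K :=
  \det (\matrix_(i < k, j < k) (w i) ^+ (q ^ (alpha j))).

(* delta_k = (k-1, ..., 0), 0-based index j |-> k-1-j *)
Definition delta_k (j : 'I_k) : nat := (k - 1 - j)%N.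

Definition Schur (lam : 'I_k -> nat) : K :=
  Amoore (fun j => lam j + delta_k j)%N / Amoore delta_k.

(* E_r(W) = S_{(1^r)}(W) for 0 <= r <= k, and 0 otherwise (r : int) *)
Definition Eelem (r : int) : K :=
  match r with
  | Posz r' => if (r' <= k)%N then Schur (fun j => (j < r')%N : nat) else 0
  | Negz _ => 0
  end.
End Moore.

(* phi^m for m : int, where phi(u) = u^q and root is its inverse (q-th root) *)
Definition frob_pow (K : fieldType) (q : nat) (root : K -> K) (m : int) (x : K) : K :=
  match m with
  | Posz a => x ^+ (q ^ a)
  | Negz a => iter a.+1 root x
  end.

(* A partition: a weakly decreasing finite sequence of positive integers;
   its length ell(lambda) is the size of the sequence, and lambda_i (1-based)
   is nth 0 lambda (i-1), which is 0 for i > ell(lambda). *)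
Definition is_partition (lam : seq nat) : bool :=
  sorted geq lam && (0%N \notin lam).

(* T_{lambda/mu}(W), entries indexed 0-based: with i = i0+1, j = j0+1,
   entry = (-1)^{lambda_i - mu_j - i + j} phi^{lambda_i - i} E_{lambda_i - mu_j - i + j}(W). *)
Definition Tskew (K : fieldType) (q : nat) (root : K -> K) (k : nat)
    (w : 'I_k -> K) (lam mu : seq nat) : K :=
  let N := maxn (size lam) (size mu) in
  \det (\matrix_(i < N, j < N)
     let e : int := ((nth 0%N lam i)%:Z - (nth 0%N mu j)%:Z - (i.+1)%:Z + (j.+1)%:Z)%R in
     (-1) ^+ `|e|%N *
     frob_pow q root ((nth 0%N lam i)%:Z - (i.+1)%:Z)%R (Eelem q w e)).

(* Main.v *)
Require Import Defs.
From HB Require Import structures.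
From mathcomp Require Import all_boot all_order all_algebra all_field.
From mathcomp Require Import mpoly zify fingroup perm.
Import GRing.Theory.
Local Open Scope ring_scope.

Lemma card_geq (N j : nat) : #|[set a : 'I_N | (j <= a)%N]| = (N - j)%N.
Proof.
rewrite -sum1_card (eq_bigl (fun a : 'I_N => (xpredT a) && (j <= a)%N)); last by move=> a; rewrite inE.
rewrite -(big_geq_mkord j N xpredT (fun _ => 1%N)) sum_nat_const_nat muln1.
by [].
Qed.

Lemma det_zero_block (R : comRingType) (N : nat) (M : 'M[R]_N) (i : nat) :
  (i < N)%N -> (forall a b : 'I_N, (i <= a)%N -> (b <= i)%N -> M a b = 0) ->
  \det M = 0.
Proof.
move=> iN Hz; rewrite /determinant; apply: big1 => s _.
suff /existsP [a Ha]: [exists a : 'I_N, (i <= a)%N && (s a <= i)%N].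
  by case/andP: Ha => h1 h2; rewrite (bigD1 a) //= Hz // mul0r mulr0.
apply: contraT => /existsPn H.
set S := [set a : 'I_N | (i <= a)%N].
have sub : s @: S \subset [set b : 'I_N | (i.+1 <= b)%N].
  apply/subsetP => y /imsetP [x]; rewrite inE => hx ->; rewrite inE.
  by move: (H x); rewrite hx /= -ltnNge.
have := subset_leq_card sub; rewrite card_imset; last exact: perm_inj.
rewrite !card_geq; lia.
Qed.

Lemma Eelem_neg (K : fieldType) q k (w : 'I_k -> K) (e : int) :
  e < 0 -> Eelem q w e = 0.
Proof. by case: e. Qed.

Lemma Eelem_big (K : fieldType) q k (w : 'I_k -> K) (e : int) :
  (k%:Z < e) -> Eelem q w e = 0.
Proof.
case: e => //= r; rewrite ltz_nat => h; by rewrite leqNgt h.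
Qed.

Lemma frob0 (K : fieldType) q (root : K -> K) m :
  (0 < q)%N -> root 0 = 0 -> frob_pow q root m 0 = 0.
Proof.
move=> q0 r0; case: m => a /=.
  by rewrite expr0n eqn0Ngt expn_gt0 q0.
by elim: a => [|a IH] //=; rewrite IH.
Qed.

Lemma nth_sorted_geq (s : seq nat) a b :
  sorted geq s -> (a <= b)%N -> (nth 0%N s b <= nth 0%N s a)%N.
Proof.
move=> ss ab; case: (ltnP b (size s)) => bs; last by rewrite nth_default.
have := @sorted_leq_nth _ geq (fun y x z h1 h2 => leq_trans h2 h1) leqnn 0%N s ss a b.
rewrite !inE => H; apply: H => //; exact: leq_ltn_trans ab bs.
Qed.

Theorem mainTheorem2 (F : finFieldType) (n : nat)
    (K : fieldType) (iota : {rmorphism {mpoly F[n]} -> K})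
    (iota_inj : injective iota)
    (root : K -> K) (root_spec : forall x : K, root x ^+ #|F| = x)
    (k : nat) (w : 'I_k -> {mpoly F[n]}) (w_indep : lin_indep w)
    (lam mu : seq nat) (Hlam : is_partition lam) (Hmu : is_partition mu) :
  Tskew #|F| root (fun i => iota (w i)) lam mu != 0 ->
  forall i : nat, (nth 0%N mu i <= nth 0%N lam i <= nth 0%N mu i + k)%N.
Proof.
move=> HT i.
have q0 : (0 < #|F|)%N by apply/card_gt0P; exists 0.
have r0 : root 0 = 0.
  by have := expf_eq0 (root 0) #|F|; rewrite q0 root_spec eqxx => /esym /eqP.
case/andP: Hlam => slam _; case/andP: Hmu => smu _.
set N := maxn (size lam) (size mu).
case: (ltnP i N) => iN; last first.
  by rewrite !nth_default //; apply: leq_trans iN; rewrite ?leq_maxl ?leq_maxr.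
apply/andP; split; rewrite leqNgt; apply/negP => Hlt; move/eqP: HT; apply; rewrite /Tskew -/N.

  apply: (@det_zero_block K N _ i iN) => a b ha hb; rewrite mxE.
  rewrite Eelem_neg ?frob0 ?mulr0 //.
  have h1 := @nth_sorted_geq lam _ _ slam ha.
  have h2 := @nth_sorted_geq mu _ _ smu hb.
  lia.
rewrite -det_tr; apply: (@det_zero_block K N _ i iN) => a b ha hb; rewrite !mxE.
rewrite Eelem_big ?frob0 ?mulr0 //.
have h1 := @nth_sorted_geq lam _ _ slam hb.
have h2 := @nth_sorted_geq mu _ _ smu ha.
lia.
Qed.
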